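(* Assume every $(\sigma,\delta)$-conjugacy class of $K$ is $(\sigma,\delta)$-algebraic. Then for every irreducible $P(T)\in K[T;\sigma,\delta]$ of degree $>1$, the skew rational function $P(T)^{-1}$ is defined at every $a\in K$.
   Context: Let $K$ be a skew field, $K^*=K\setminus\{0\}$, $\sigma\colon K\to K$ a ring endomorphism and $\delta\colon K\to K$ a $\sigma$-derivation. $K[T;\sigma,\delta]$ is the skew polynomial ring with $Ta=\sigma(a)T+\delta(a)$. The $(\sigma,\delta)$-action of $K^*$ on $K$ is ${}^{b}a=\sigma(b)ab^{-1}+\delta(b)b^{-1}$; $\Delta(a)=\{{}^{b}a:b\in K^*\}$ is the $(\sigma,\delta)$-conjugacy class of $a$. For $P\in K[T;\sigma,\delta]$ and $a\in K$, $P(a)$ is the unique element of $K$ with $P(T)-P(a)\in K[T;\sigma,\delta](T-a)$. A conjugacy class $\Delta(a)$ is $(\sigma,\delta)$-algebraic if there is a nonzero $P\in K[T;\sigma,\delta]$ with $P(c)=0$ for all $c\in\Delta(a)$. For a set $Z$ with a $K^*$-action, the skew product of functions $Z\to K$ is $(f\diamond g)(z)=f({}^{g(z)}z)g(z)$ if $g(z)\neq0$, $0$ otherwise; $f$ is skew invertible if some $g$ satisfies $f\diamond g=g\diamond f=1$. $K(T;\sigma,\delta)$ is the division ring of left fractions of $K[T;\sigma,\delta]$; each $f$ has a unique minimal representation $P(T)^{-1}Q(T)$ with $P$ monic of least degree; $f$ is defined at $a$ if the function $\Delta(a)\to K$, $c\mapsto P(c)$, is skew invertible. *)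

(* Defs.v *)
(* Skew polynomial ring K[T;sigma,delta] over a skew field K,
   built on the additive structure of {poly K} (coefficient lists) with an
   explicitly defined skew multiplication.  NEVER use the ordinary product of
   {poly K} for skew polynomials: use [skew_mul]. *)
From HB Require Import structures.
From mathcomp Require Import all_boot all_order all_algebra.
From Stdlib Require Import ClassicalEpsilon.
Set Implicit Arguments. Unset Strict Implicit. Unset Printing Implicit Defensive.
Import Order.TTheory GRing.Theory.
Local Open Scope ring_scope.

Definition skew_field (K : unitRingType) : Prop :=
  forall x : K, x != 0 -> x \is a GRing.unit.

(* delta is a sigma-derivation: additive, delta(ab) = sigma(a) delta(b) + delta(a) b,
   matching T a = sigma(a) T + delta(a). *)
Definition sigma_derivation (K : unitRingType) (sigma delta : K -> K) : Prop :=
  (forall x y, delta (x + y) = delta x + delta y) /\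
  (forall x y, delta (x * y) = sigma x * delta y + delta x * y).

Section Skew.
Variables (K : unitRingType) (sigma delta : K -> K).

(* left multiplication by T:  T * (sum a_i T^i) = sum (sigma(a_i) T^(i+1) + delta(a_i) T^i) *)
Definition mulT (q : {poly K}) : {poly K} :=
  map_poly sigma q * 'X + map_poly delta q.

Definition skew_mul (p q : {poly K}) : {poly K} :=
  \sum_(i < size p) p`_i *: iter i mulT q.

Definition skew_unit (p : {poly K}) : Prop :=
  exists v, skew_mul p v = 1 /\ skew_mul v p = 1.

Definition skew_irreducible (p : {poly K}) : Prop :=
  p != 0 /\ ~ skew_unit p /\
  forall a b, p = skew_mul a b -> skew_unit a \/ skew_unit b.

Definition skew_eval (p : {poly K}) (a : K) : K :=
  epsilon (inhabits 0)
    (fun c => exists q, p = skew_mul q ('X - a%:P) + c%:P).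

Definition sd_conj (b a : K) : K := sigma b * a * b^-1 + delta b * b^-1.

Definition conj_class (a c : K) : Prop := exists2 b : K, b != 0 & c = sd_conj b a.

Definition sd_algebraic (a : K) : Prop :=
  exists p : {poly K}, p != 0 /\ forall c, conj_class a c -> skew_eval p c = 0.

(* skew product of functions Z = Delta(a) -> K (represented by functions K -> K,
   only their values on Delta(a) matter) *)
Definition skew_prod (f g : K -> K) (z : K) : K :=
  if g z == 0 then 0 else f (sd_conj (g z) z) * g z.

Definition skew_invertible (a : K) (f : K -> K) : Prop :=
  exists g : K -> K, forall z, conj_class a z ->
    skew_prod f g z = 1 /\ skew_prod g f z = 1.

(* equality of left fractions A^-1 B = C^-1 D in K(T;sigma,delta)
   (A, C nonzero): U A = V C <> 0 and U B = V D for some U, V *)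
Definition lfrac_eq (A B C D : {poly K}) : Prop :=
  exists U V, skew_mul U A = skew_mul V C /\ skew_mul U A != 0 /\
              skew_mul U B = skew_mul V D.

Definition minimal_rep (A B P Q : {poly K}) : Prop :=
  P \is monic /\ lfrac_eq A B P Q /\
  forall P' Q', P' != 0 -> lfrac_eq A B P' Q' -> (size P <= size P')%N.

Definition defined_at (A B : {poly K}) (a : K) : Prop :=
  exists P Q, minimal_rep A B P Q /\ skew_invertible a (fun c => skew_eval P c).

End Skew.

(* Main.v *)
Require Import Defs.
From HB Require Import structures.
From mathcomp Require Import all_boot all_order all_algebra.
From Stdlib Require Import ClassicalEpsilon Classical Lia.
From mathcomp Require Import zify.
Import GRing.Theory.
Local Open Scope ring_scope.
Set Implicit Arguments. Unset Strict Implicit. Unset Printing Implicit Defensive.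

Section Dev.
Variables (K : unitRingType) (sigma : {rmorphism K -> K}) (delta : K -> K).
Hypothesis hK : skew_field K.
Hypothesis hdelta : sigma_derivation sigma delta.

Lemma deltaD x y : delta (x + y) = delta x + delta y.
Proof. by case: hdelta. Qed.
Lemma deltaM x y : delta (x * y) = sigma x * delta y + delta x * y.
Proof. by case: hdelta. Qed.
Lemma delta0 : delta 0 = 0.
Proof. by apply: (addrI (delta 0)); rewrite -deltaD !addr0. Qed.
Lemma deltaN x : delta (- x) = - delta x.
Proof. by apply/eqP; rewrite -addr_eq0 -deltaD addNr delta0. Qed.
Lemma deltaB x y : delta (x - y) = delta x - delta y.
Proof. by rewrite deltaD deltaN. Qed.
Lemma delta1 : delta 1 = 0.
Proof.
have := deltaM 1 1; rewrite !mulr1 rmorph1 mul1r => h.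
by apply: (addrI (delta 1)); rewrite addr0 -h.
Qed.

Lemma unitK (x : K) : x != 0 -> x \is a GRing.unit.
Proof. exact: hK. Qed.

Lemma mulf_neq0K (x y : K) : x != 0 -> y != 0 -> x * y != 0.
Proof.
move=> x0 y0; apply/eqP => /(congr1 (fun z => x^-1 * z)).
by rewrite mulKr ?unitK // mulr0 => /eqP; rewrite (negPf y0).
Qed.

Lemma sigma_neq0 (x : K) : x != 0 -> sigma x != 0.
Proof.
move=> x0; apply/eqP => sx.
have : sigma x * sigma x^-1 = 1 by rewrite -rmorphM mulrV ?unitK // rmorph1.
by rewrite sx mul0r => /eqP; rewrite eq_sym oner_eq0.
Qed.

Lemma sigma_inj : injective sigma.
Proof.
move=> x y /eqP; rewrite -subr_eq0 -rmorphB => /eqP h.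
by apply/eqP; rewrite -subr_eq0; apply/negP => /negP /sigma_neq0; rewrite h eqxx.
Qed.


Local Notation mT := (mulT sigma delta).
Local Notation sm := (skew_mul sigma delta).

Lemma size_map_le (f : K -> K) (q : {poly K}) : (size (map_poly f q) <= size q)%N.
Proof. exact: size_poly. Qed.

Lemma coef_mT (q : {poly K}) k :
  (mT q)`_k = (if k == 0%N then 0 else sigma q`_k.-1) + delta q`_k.
Proof.
rewrite /mulT coefD coefMX [(map_poly delta _)`_k]coef_map_id0 ?delta0 //.
by case: (k == 0%N) => //; rewrite coef_map_id0 ?rmorph0.
Qed.

Lemma mT0 : mT 0 = 0.
Proof. by apply/polyP => k; rewrite coef_mT !coef0 rmorph0 delta0 if_same addr0. Qed.

Lemma iter_mT0 i : iter i mT 0 = 0.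
Proof. by elim: i => //= i ->; rewrite mT0. Qed.

Lemma mTD (p q : {poly K}) : mT (p + q) = mT p + mT q.
Proof.
apply/polyP => k; rewrite [LHS]coef_mT [RHS]coefD !coef_mT !coefD deltaD.
case: (k == 0%N); first by rewrite !add0r.
by rewrite rmorphD addrACA.
Qed.

Lemma mTZ (c : K) (q : {poly K}) : mT (c *: q) = sigma c *: mT q + delta c *: q.
Proof.
apply/polyP => k; rewrite [LHS]coef_mT [RHS]coefD !coefZ coef_mT deltaM.
case: (k == 0%N); first by rewrite !add0r.
by rewrite rmorphM mulrDr addrA.
Qed.

Lemma iterS_nz i (x : K) : x != 0 -> iter i sigma x != 0.
Proof. by move=> x0; elim: i => //= i IH; apply: sigma_neq0. Qed.

Lemma size_mT (q : {poly K}) : q != 0 ->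
  size (mT q) = (size q).+1 /\ lead_coef (mT q) = sigma (lead_coef q).
Proof.
move=> q0.
have hs : size (map_poly sigma q) = size q by apply: size_map_inj_poly; [exact: sigma_inj|exact: rmorph0].
have m0 : map_poly sigma q != 0 by rewrite -size_poly_eq0 hs size_poly_eq0.
have hlt : (size (map_poly delta q) < size (map_poly sigma q * 'X)%R)%N.
  by rewrite size_mulX // hs ltnS; apply: size_map_le.
rewrite /mulT size_polyDl // lead_coefDl // size_mulX // hs lead_coefMX.
by split => //; apply: lead_coef_map_inj; [exact: sigma_inj|exact: rmorph0].
Qed.

Lemma size_iter_mT i (q : {poly K}) : q != 0 ->
  size (iter i mT q) = (size q + i)%N /\ lead_coef (iter i mT q) = iter i sigma (lead_coef q).
Proof.
move=> q0; elim: i => [|i [IHs IHl]] /=; first by rewrite addn0.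
have nz : iter i mT q != 0 by rewrite -size_poly_eq0 IHs addn_eq0 size_poly_eq0 (negPf q0).
by have [-> ->] := size_mT nz; rewrite IHs IHl addnS.
Qed.

Lemma sm_wide n (p q : {poly K}) : (size p <= n)%N ->
  sm p q = \sum_(i < n) p`_i *: iter i mT q.
Proof.
move=> le; rewrite /skew_mul (big_ord_widen n (fun i => p`_i *: iter i mT q) le).
rewrite big_mkcond /=; apply: eq_bigr => i _.
by case: ifP => // /negbT; rewrite -leqNgt => h; rewrite nth_default // scale0r.
Qed.

Lemma smDl (p1 p2 q : {poly K}) : sm (p1 + p2) q = sm p1 q + sm p2 q.
Proof.
set n := maxn (size p1) (size p2).
rewrite (@sm_wide n) ?(leq_trans (size_polyD _ _)) //.
rewrite (@sm_wide n p1) ?leq_maxl // (@sm_wide n p2) ?leq_maxr // -big_split /=.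
by apply: eq_bigr => i _; rewrite coefD scalerDl.
Qed.

Lemma smZl (c : K) (p q : {poly K}) : sm (c *: p) q = c *: sm p q.
Proof.
rewrite (@sm_wide (size p)) ?size_scale_leq // /skew_mul scaler_sumr.
by apply: eq_bigr => i _; rewrite coefZ scalerA.
Qed.

Lemma sm0l (q : {poly K}) : sm 0 q = 0.
Proof. by rewrite /skew_mul size_poly0 big_ord0. Qed.

Lemma sm0r (p : {poly K}) : sm p 0 = 0.
Proof. by rewrite /skew_mul big1 // => i _; rewrite iter_mT0 scaler0. Qed.

Lemma smCl (c : K) (q : {poly K}) : sm c%:P q = c *: q.
Proof. by rewrite (@sm_wide 1) ?size_polyC_leq1 // big_ord1 coefC. Qed.

Lemma size_sm (p q : {poly K}) : p != 0 -> q != 0 ->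
  size (sm p q) = (size p + size q).-1 /\
  lead_coef (sm p q) = lead_coef p * iter (size p).-1 sigma (lead_coef q).
Proof.
move=> p0 q0.
have sp : size p = (size p).-1.+1 by rewrite prednK // size_poly_gt0.
rewrite /skew_mul sp big_ord_recr /=.
set n := (size p).-1.
have [hs hl] := size_iter_mT n q0.
have lp0 : lead_coef p != 0 by rewrite lead_coef_eq0.
have hl0 : lead_coef p * iter n sigma (lead_coef q) != 0.
  by apply: mulf_neq0K => //; apply: iterS_nz; rewrite lead_coef_eq0.
have hsz : size (p`_n *: iter n mT q) = (size q + n)%N.
  by rewrite lreg_size ?hs //; apply/mulrI/(unitK lp0).
have hlt : (size (\sum_(i < n) p`_i *: iter i mT q)%R < size (p`_n *: iter n mT q))%N.
  rewrite hsz; apply: (leq_ltn_trans (size_sum _ _ _)).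
  have sq : (0 < size q)%N by rewrite size_poly_gt0.
  have hm : (\max_(i < n) size (p`_i *: iter i mT q) <= (size q + n).-1)%N.
    apply/bigmax_leqP => i _.
    apply: (leq_trans (size_scale_leq _ _)); have [hs' _] := size_iter_mT i q0.
    rewrite hs' -ltnS prednK ?ltn_add2l //; last by rewrite addn_gt0 sq.
  apply: (leq_ltn_trans hm); rewrite prednK // addn_gt0 sq //.
rewrite addrC size_polyDl // lead_coefDl // hsz lead_coef_lreg; last by apply/mulrI/(unitK lp0).
by rewrite hl addnC.
Qed.

Lemma iter_sigma1 i : iter i sigma 1 = 1.
Proof. by elim: i => //= i ->; rewrite rmorph1. Qed.

Lemma division (p : {poly K}) (c : K) :
  exists q r, p = sm q ('X - c%:P) + r%:P.
Proof.
move: {2}(size p) (leqnn (size p)) => n; elim: n p => [|n IH] p hp.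
  by exists 0, (p`_0); rewrite sm0l add0r -size1_polyC // (leq_trans hp).
case: (ltnP (size p) 2) => h2.
  by exists 0, (p`_0); rewrite sm0l add0r -size1_polyC.
set m := (size p - 2)%N.
have sp : size p = m.+2 by rewrite /m -addn2 subnK.
have p0 : p != 0 by rewrite -size_poly_gt0 sp.
have lp0 : lead_coef p != 0 by rewrite lead_coef_eq0.
set q1 := lead_coef p *: 'X^m.
have q10 : q1 != 0.
  by rewrite -size_poly_eq0 /q1 lreg_size ?size_polyXn //; apply/mulrI/(unitK lp0).
have sq1 : size q1 = m.+1.
  by rewrite /q1 lreg_size ?size_polyXn //; apply/mulrI/(unitK lp0).
have lq1 : lead_coef q1 = lead_coef p.
  by rewrite /q1 lead_coef_lreg ?lead_coefXn ?mulr1 //; apply/mulrI/(unitK lp0).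
have Xc0 : ('X - c%:P) != 0 by rewrite -size_poly_eq0 size_XsubC.
have [hs hl] := size_sm q10 Xc0.
rewrite sq1 size_XsubC lead_coefXsubC iter_sigma1 mulr1 lq1 addn2 /= in hs hl.
have hsz : (size (p - sm q1 ('X - c%:P))%R <= n)%N.
  apply: (@leq_trans m.+1); last by rewrite -ltnS -sp.
  apply/leq_sizeP => j hj; rewrite coefB.
  case: (ltngtP j m.+1) => hjm.
  - by move: hj; rewrite leqNgt hjm.
  - by rewrite !nth_default ?subr0 // ?hs ?sp.
  - have e1 : p`_m.+1 = lead_coef p by rewrite lead_coefE sp.
    have e2 : (sm q1 ('X - c%:P))`_m.+1 = lead_coef (sm q1 ('X - c%:P)) by rewrite lead_coefE hs.
    by rewrite hjm e1 e2 hl subrr.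
have [q2 [r e]] := IH _ hsz.
exists (q1 + q2), r; rewrite smDl -addrA -e.
by rewrite addrC subrK.
Qed.

Definition Ta (a x : K) := sigma x * a + delta x.
Definition Lam (a : K) (p : {poly K}) (x : K) :=
  \sum_(k < size p) p`_k * iter k (Ta a) x.

Lemma Ta0 a : Ta a 0 = 0.
Proof. by rewrite /Ta rmorph0 mul0r delta0 addr0. Qed.
Lemma TaD a x y : Ta a (x + y) = Ta a x + Ta a y.
Proof. by rewrite /Ta rmorphD deltaD mulrDl addrACA. Qed.
Lemma TaN a x : Ta a (- x) = - Ta a x.
Proof. by rewrite /Ta rmorphN deltaN mulNr opprD. Qed.
Lemma TaM a c y : Ta a (c * y) = sigma c * Ta a y + delta c * y.
Proof. by rewrite /Ta rmorphM deltaM mulrDr !mulrA addrA. Qed.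
Lemma Ta_sum a n (F : 'I_n -> K) :
  Ta a (\sum_(i < n) F i) = \sum_(i < n) Ta a (F i).
Proof. exact: (big_morph (Ta a) (TaD a) (Ta0 a)). Qed.

Lemma iterTa0 a k : iter k (Ta a) 0 = 0.
Proof. by elim: k => //= k ->; rewrite Ta0. Qed.
Lemma iterTaD a k x y : iter k (Ta a) (x + y) = iter k (Ta a) x + iter k (Ta a) y.
Proof. by elim: k => //= k ->; rewrite TaD. Qed.

Lemma Lam_wide n a (p : {poly K}) x : (size p <= n)%N ->
  Lam a p x = \sum_(k < n) p`_k * iter k (Ta a) x.
Proof.
move=> le; rewrite /Lam (big_ord_widen n (fun k => p`_k * iter k (Ta a) x) le).
rewrite big_mkcond /=; apply: eq_bigr => i _.
by case: ifP => // /negbT; rewrite -leqNgt => h; rewrite nth_default // mul0r.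
Qed.

Lemma LamDp a (p q : {poly K}) x : Lam a (p + q) x = Lam a p x + Lam a q x.
Proof.
set n := maxn (size p) (size q).
rewrite (@Lam_wide n) ?(leq_trans (size_polyD _ _)) //.
rewrite (@Lam_wide n a p) ?leq_maxl // (@Lam_wide n a q) ?leq_maxr // -big_split /=.
by apply: eq_bigr => i _; rewrite coefD mulrDl.
Qed.

Lemma Lam0p a x : Lam a 0 x = 0.
Proof. by rewrite /Lam size_poly0 big_ord0. Qed.

Lemma LamZp a (c : K) (p : {poly K}) x : Lam a (c *: p) x = c * Lam a p x.
Proof.
rewrite (@Lam_wide (size p)) ?size_scale_leq // /Lam mulr_sumr.
by apply: eq_bigr => i _; rewrite coefZ mulrA.
Qed.

Lemma LamC a (c : K) x : Lam a c%:P x = c * x.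
Proof. by rewrite (@Lam_wide 1) ?size_polyC_leq1 // big_ord1 coefC. Qed.

Lemma Lam0x a (p : {poly K}) : Lam a p 0 = 0.
Proof. by rewrite /Lam big1 // => i _; rewrite iterTa0 mulr0. Qed.

Lemma LamDx a (p : {poly K}) x y : Lam a p (x + y) = Lam a p x + Lam a p y.
Proof. by rewrite /Lam -big_split /=; apply: eq_bigr => i _; rewrite iterTaD mulrDr. Qed.

Lemma LamNx a (p : {poly K}) x : Lam a p (- x) = - Lam a p x.
Proof. by apply/eqP; rewrite -addr_eq0 -LamDx addNr Lam0x. Qed.

Lemma Lam_sumx a (p : {poly K}) n (F : 'I_n -> K) :
  Lam a p (\sum_(i < n) F i) = \sum_(i < n) Lam a p (F i).
Proof. exact: (big_morph (Lam a p) (LamDx a p) (Lam0x a p)). Qed.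

Lemma Lam_mT a (q : {poly K}) x : Lam a (mT q) x = Ta a (Lam a q x).
Proof.
have [->|q0] := eqVneq q 0; first by rewrite mT0 !Lam0p Ta0.
have [hs _] := size_mT q0.
rewrite (@Lam_wide (size q).+1) ?hs //.
under eq_bigr => k _ do rewrite coef_mT mulrDl.
rewrite big_split /= big_ord_recl /= mul0r add0r [X in _ + X]big_ord_recr /=.
rewrite [q`_(size q)]nth_default // delta0 mul0r addr0.
rewrite /Lam Ta_sum.
under [in RHS]eq_bigr => k _ do rewrite TaM.
by rewrite big_split.
Qed.

Lemma Lam_iter a i (q : {poly K}) x :
  Lam a (iter i mT q) x = iter i (Ta a) (Lam a q x).
Proof. by elim: i => //= i <-; rewrite Lam_mT. Qed.

Lemma Lam_sump a n (F : 'I_n -> {poly K}) x :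
  Lam a (\sum_(i < n) F i) x = \sum_(i < n) Lam a (F i) x.
Proof. exact: (big_morph (fun p => Lam a p x) (fun p q => LamDp a p q x) (Lam0p a x)). Qed.

Lemma LamM a (p q : {poly K}) x : Lam a (sm p q) x = Lam a p (Lam a q x).
Proof.
rewrite /skew_mul Lam_sump [RHS]/Lam; apply: eq_bigr => i _.
by rewrite LamZp Lam_iter.
Qed.

Lemma LamXC a (c : K) x : Lam a ('X - c%:P) x = Ta a x - c * x.
Proof.
rewrite (@Lam_wide 2) ?size_XsubC // !big_ord_recl big_ord0 /=.
rewrite !coefB !coefX !coefC /= sub0r subr0 mul1r addr0.
by rewrite addrC mulNr.
Qed.


Local Notation sdc := (sd_conj sigma delta).

Lemma sdE b a : sdc b a = Ta a b * b^-1.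
Proof. by rewrite /sd_conj /Ta mulrDl. Qed.

Lemma conjP b a c : b != 0 -> (c = sdc b a <-> c * b = Ta a b).
Proof.
move=> b0; rewrite sdE; split => [->|<-]; first by rewrite divrK ?unitK.
by rewrite mulrK ?unitK.
Qed.

Lemma conj_mul b a : b != 0 -> sdc b a * b = Ta a b.
Proof. by move=> b0; apply/conjP. Qed.

Lemma iter_conj a b c k x : c * b = Ta a b ->
  iter k (Ta c) x * b = iter k (Ta a) (x * b).
Proof.
move=> hc; elim: k => //= k <-.
by rewrite /Ta mulrDl -mulrA hc -/(Ta a b) -TaM.
Qed.

Lemma Lam_conj a b c (p : {poly K}) x : c * b = Ta a b ->
  Lam c p x * b = Lam a p (x * b).
Proof.
move=> hc; rewrite /Lam mulr_suml; apply: eq_bigr => i _.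
by rewrite -mulrA (iter_conj _ _ hc).
Qed.

Lemma skew_eval_Lam (p : {poly K}) c : skew_eval sigma delta p c = Lam c p 1.
Proof.
have := @epsilon_spec K (inhabits 0)
  (fun e => exists q, p = skew_mul sigma delta q ('X - c%:P) + e%:P).
rewrite -/(skew_eval sigma delta p c).
case; first by have [q [r e]] := division p c; exists r, q.
move=> q e; rewrite [in RHS]e LamDp LamM LamXC LamC mulr1.
by rewrite /Ta rmorph1 mul1r delta1 addr0 mulr1 subrr Lam0x add0r.
Qed.

Lemma skew_eval_conj a b (p : {poly K}) : b != 0 ->
  skew_eval sigma delta p (sdc b a) * b = Lam a p b.
Proof.
by move=> b0; rewrite skew_eval_Lam (Lam_conj _ _ (conj_mul a b0)) mul1r.
Qed.

Definition inC a (e : K) := Ta a e = a * e.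

Lemma inC0 a : inC a 0.
Proof. by rewrite /inC Ta0 mulr0. Qed.
Lemma inC1 a : inC a 1.
Proof. by rewrite /inC /Ta rmorph1 mul1r delta1 addr0 mulr1. Qed.
Lemma inCN a e : inC a e -> inC a (- e).
Proof. by rewrite /inC TaN mulrN => ->. Qed.
Lemma inCV a e : inC a e -> inC a e^-1.
Proof.
have [->|e0] := eqVneq e 0; first by rewrite invr0.
move=> he; have ue := unitK e0.
have hd : delta e^-1 = - (sigma e^-1 * delta e * e^-1).
  have := deltaM e e^-1; rewrite mulrV // delta1 => /esym /eqP.
  rewrite addr_eq0 => /eqP h.
  apply: (mulrI (unitK (sigma_neq0 e0))).
  by rewrite h mulrN !mulrA -rmorphM mulrV // rmorph1 mul1r.
rewrite /inC /Ta hd; move: he; rewrite /inC /Ta => he.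
apply: (mulrI (unitK (sigma_neq0 e0))).
rewrite mulrDr mulrN !mulrA -rmorphM mulrV // rmorph1 !mul1r.
have -> : sigma e * a = a * e - delta e by rewrite -he addrK.
by rewrite mulrBl mulrK.
Qed.

Lemma Ta_C a x e : inC a e -> Ta a (x * e) = Ta a x * e.
Proof.
by rewrite /inC => he; rewrite TaM he /Ta mulrDl !mulrA.
Qed.

Lemma iter_C a k x e : inC a e -> iter k (Ta a) (x * e) = iter k (Ta a) x * e.
Proof. by move=> he; elim: k => //= k ->; rewrite Ta_C. Qed.

Lemma Lam_C a (p : {poly K}) x e : inC a e -> Lam a p (x * e) = Lam a p x * e.
Proof.
move=> he; rewrite /Lam mulr_suml; apply: eq_bigr => i _.
by rewrite iter_C // mulrA.
Qed.

Lemma ker_conj a c v z : v != 0 -> c * v = Ta a v -> c * z = Ta a z ->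
  inC a (v^-1 * z).
Proof.
move=> v0 hv hz; set e := v^-1 * z.
have ze : z = v * e by rewrite /e mulVKr ?unitK.
move: hz; rewrite ze TaM mulrA hv /Ta mulrDl => h.
have : sigma v * (sigma e * a + delta e) = sigma v * (a * e).
  by apply: (addIr (delta v * e)); rewrite -h mulrA.
by move/(mulrI (unitK (sigma_neq0 v0))).
Qed.


Definition dep a N (y : nat -> K) :=
  exists d : nat -> K, (forall i, (i < N)%N -> inC a (d i)) /\
    (exists2 i, (i < N)%N & d i != 0) /\ \sum_(i < N) y i * d i = 0.

Lemma ker_bound a n : forall (R : {poly K}) (y : nat -> K), size R = n.+1 ->
  (forall i, (i <= n)%N -> Lam a R (y i) = 0) -> dep a n.+1 y.
Proof.
elim: n => [|n IH] R y hR hy.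
  exists (fun _ => 1); split; first by move=> i _; apply: inC1.
  split; first by exists 0%N => //; rewrite oner_eq0.
  rewrite big_ord1 mulr1.
  have := hy 0%N (leqnn _); rewrite (size1_polyC (eq_leq hR)) LamC.
  have r0 : R`_0 != 0.
    have e := size1_polyC (eq_leq hR).
    by apply/eqP => h; move: hR; rewrite e h size_polyC eqxx.
  apply: contra_eq => y0; exact: mulf_neq0K.
have [y0|v0] := eqVneq (y n.+1) 0.
  exists (fun i => if i == n.+1 then 1 else 0); split.
    by move=> i _; case: ifP => _; [apply: inC1|apply: inC0].
  split; first by exists n.+1 => //; rewrite eqxx oner_eq0.
  rewrite big_ord_recr /= eqxx y0 mul0r addr0 big1 // => i _.
  by rewrite ltn_eqF ?mulr0.
set v := y n.+1 in v0.
set c := Ta a v * v^-1.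
have hcv : c * v = Ta a v by rewrite /c divrK ?unitK.
have [R' [r eR]] := division R c.
have hXc : Lam a ('X - c%:P) v = 0 by rewrite LamXC hcv subrr.
have r0 : r = 0.
  have := hy n.+1 (leqnn _); rewrite eR LamDp LamM hXc Lam0x add0r LamC.
  by apply: contra_eq => r0; exact: mulf_neq0K.
rewrite r0 addr0 in eR.
have R'0 : R' != 0.
  by apply/eqP => h; move: hR; rewrite eR h sm0l size_poly0.
have Xc0 : ('X - c%:P) != 0 by rewrite -size_poly_eq0 size_XsubC.
have [hs _] := size_sm R'0 Xc0.
have sR' : size R' = n.+1.
  by move: hR; rewrite eR hs size_XsubC addn2 /= => [[]].
have [d [dC [[i0 hi0 di0] hsum]]] :=
  IH R' (fun i => Lam a ('X - c%:P) (y i)) sR'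
    (fun i hi => etrans (esym (LamM _ _ _ _)) (etrans (congr1 (fun p => Lam a p (y i)) (esym eR)) (hy i (leqW hi)))).
set z := \sum_(i < n.+1) y i * d i.
have hz : c * z = Ta a z.
  apply/eqP; rewrite eq_sym -subr_eq0; apply/eqP.
  rewrite -LamXC; rewrite -[RHS]hsum /z Lam_sumx; apply: eq_bigr => i _.
  by rewrite Lam_C //; exact: dC (ltn_ord i).
have eC := ker_conj v0 hcv hz.
exists (fun i => if i == n.+1 then - (v^-1 * z) else d i); split.
  move=> i hi; case: ifP => hin; first exact: inCN.
  by apply: dC; move: hi; rewrite ltnS leq_eqVlt hin.
split.
  by exists i0; [apply: leqW|rewrite ltn_eqF].
rewrite big_ord_recr /= eqxx.
rewrite (eq_bigr (fun i : 'I_n.+1 => y i * d i)); last by move=> i _; rewrite ltn_eqF.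
by rewrite -/z mulrN mulVKr ?unitK // subrr.
Qed.

Lemma max_indep a M : (forall y, dep a M y) ->
  exists r (y : nat -> K), ~ dep a r y /\ forall y', dep a r.+1 y'.
Proof.
move=> hM; apply: NNPP => H.
suff : forall k, exists y, ~ dep a k y.
  by move=> /(_ M) [y]; apply; apply: hM.
elim => [|k [y hy]].
  by exists (fun _ => 0) => [[d [_ [[i]]]]].
apply: not_all_ex_not => hall; apply: H; exists k, y; split => //.
Qed.

Lemma surj a (f : K -> K) M : (forall y, dep a M y) ->
  (forall x y, f (x + y) = f x + f y) ->
  (forall x e, inC a e -> f (x * e) = f x * e) ->
  (forall x, f x = 0 -> x = 0) -> forall t, exists x, f x = t.
Proof.
move=> hM fD fC finj t.
have f0 : f 0 = 0 by apply: (addrI (f 0)); rewrite -fD !addr0.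
have fN x : f (- x) = - f x by apply/eqP; rewrite -addr_eq0 -fD addNr f0.
have fS n (F : 'I_n -> K) : f (\sum_(i < n) F i) = \sum_(i < n) f (F i).
  exact: (big_morph f fD f0).
have [r [y [hy hr]]] := max_indep hM.
have [d [dC [[i0 hi0 di0] hsum]]] := hr (fun i => if (i < r)%N then f (y i) else t).
move: hsum; rewrite big_ord_recr /= ltnn.
rewrite (eq_bigr (fun i : 'I_r => f (y i * d i))); last first.
  by move=> i _; rewrite ltn_ord fC //; apply: dC; exact: leqW (ltn_ord i).
rewrite -fS.
have [dr0|dr0] := eqVneq (d r) 0.
  rewrite dr0 mulr0 addr0 => /finj hs; exfalso; apply: hy.
  exists d; split; first by move=> i hi; apply: dC; rewrite leqW.
  split => //; exists i0 => //.
  by move: hi0; rewrite ltnS leq_eqVlt => /orP [/eqP e|//]; move: di0; rewrite e dr0 eqxx.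
move=> /eqP; rewrite addrC addr_eq0 => /eqP ht.
exists ((- \sum_(i < r) y i * d i) * (d r)^-1).
rewrite fC; last by apply: inCV; apply: dC.
by rewrite fN -ht mulrK ?unitK.
Qed.


Lemma sdc_comp f1 f2 z : f1 != 0 -> f2 != 0 -> sdc f1 (sdc f2 z) = sdc (f1 * f2) z.
Proof.
move=> h1 h2; apply/conjP; first exact: mulf_neq0K.
rewrite mulrA conj_mul // /Ta mulrDl -mulrA conj_mul //.
by rewrite rmorphM deltaM /Ta mulrDr !mulrA addrA.
Qed.

Lemma sdc1 z : sdc 1 z = z.
Proof. by rewrite sdE invr1 mulr1 /Ta rmorph1 mul1r delta1 addr0. Qed.

Lemma sdcC a e : e != 0 -> inC a e -> sdc e a = a.
Proof. by move=> e0 he; rewrite sdE he mulrK ?unitK. Qed.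

Lemma skew_unit_size (v : {poly K}) : skew_unit sigma delta v -> size v = 1%N.
Proof.
move=> [w [h1 _]].
have v0 : v != 0 by apply/eqP => e; move: h1; rewrite e sm0l => /eqP; rewrite eq_sym oner_eq0.
have w0 : w != 0 by apply/eqP => e; move: h1; rewrite e sm0r => /eqP; rewrite eq_sym oner_eq0.
have [hs _] := size_sm v0 w0; move: hs; rewrite h1 size_poly1.
have : (0 < size v)%N by rewrite size_poly_gt0.
have : (0 < size w)%N by rewrite size_poly_gt0.
rewrite -!subn1; lia.
Qed.

Lemma main (halg : forall a, sd_algebraic sigma delta a) (P : {poly K}) :
  skew_irreducible sigma delta P -> (2 < size P)%N -> forall a, defined_at sigma delta P 1 a.
Proof.
move=> [P0nz [Pnu Pirr]] hsz a.
set l := lead_coef P.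
have l0 : l != 0 by rewrite lead_coef_eq0.
have ul := unitK l0.
have li0 : l^-1 != 0 by rewrite invr_eq0.
set P0 := l^-1 *: P.
have sP0 : size P0 = size P by rewrite lreg_size //; apply/mulrI/(unitK li0).
have mP0 : P0 \is monic.
  by rewrite monicE /P0 lead_coef_lreg ?mulVr //; apply/mulrI/(unitK li0).
have P00 : P0 != 0 by rewrite -size_poly_eq0 sP0 size_poly_eq0.
exists P0, (l^-1)%:P; split.
  split => //; split.
    have s1 q : sm 1 q = q by rewrite -polyC1 smCl scale1r.
    exists (l^-1)%:P, 1; rewrite !s1 !smCl -alg_polyC.
    by split.
  move=> P' Q' P'0 [U [V [e1 [ne e2]]]].
  have U0 : U != 0 by apply/eqP => e; move: ne; rewrite e sm0l eqxx.
  have V0 : V != 0 by apply/eqP => e; move: ne; rewrite e1 e sm0l eqxx.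
  have o0 : (1 : {poly K}) != 0 by rewrite oner_eq0.
  have [sU1 _] := size_sm U0 o0.
  have Q'0 : Q' != 0.
    apply/eqP => e; move: e2; rewrite e sm0r => /eqP; rewrite -size_poly_eq0 sU1 size_poly1.
    by rewrite addn1 /= size_poly_eq0 (negPf U0).
  have [sUP _] := size_sm U0 P0nz.
  have [sVP _] := size_sm V0 P'0.
  have [sVQ _] := size_sm V0 Q'0.
  move: (congr1 (fun p : {poly K} => size p) e1) (congr1 (fun p : {poly K} => size p) e2) => /=.
  rewrite sUP sVP sU1 sVQ size_poly1 sP0.
  have : (0 < size U)%N by rewrite size_poly_gt0.
  have : (0 < size V)%N by rewrite size_poly_gt0.
  have : (0 < size Q')%N by rewrite size_poly_gt0.
  have : (0 < size P')%N by rewrite size_poly_gt0.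
  rewrite -!subn1; move: (size P') (size Q') (size V) (size U) (size P) => ? ? ? ? ?; lia.
set Psi := Lam a P0.
have PsiD x y : Psi (x + y) = Psi x + Psi y by apply: LamDx.
have PsiC x e : inC a e -> Psi (x * e) = Psi x * e by apply: Lam_C.
have Psi0 : Psi 0 = 0 by apply: Lam0x.
have Psiinj x : Psi x = 0 -> x = 0.
  move=> h; apply/eqP; apply/negP => /negP x0.
  have hP : Lam a P x = 0.
    by move: h; rewrite /Psi /P0 LamZp => /(congr1 (fun y => l * y)); rewrite mulVKr // mulr0.
  set c := Ta a x * x^-1.
  have hcx : c * x = Ta a x by rewrite /c divrK ?unitK.
  have [R' [r eR]] := division P c.
  have r0 : r = 0.
    move: hP; rewrite eR LamDp LamM LamXC hcx subrr Lam0x add0r LamC.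
    by apply: contra_eq => r0; exact: mulf_neq0K.
  rewrite r0 addr0 in eR.
  have R'0 : R' != 0 by apply/eqP => e; move: P0nz; rewrite eR e sm0l eqxx.
  have Xc0 : ('X - c%:P) != 0 by rewrite -size_poly_eq0 size_XsubC.
  have [hs _] := size_sm R'0 Xc0.
  case: (Pirr _ _ eR) => /skew_unit_size; last by rewrite size_XsubC.
  move: hsz; rewrite eR hs size_XsubC -!subn1; lia.
have [G [G0 hG]] := halg a.
have hGall b : Lam a G b = 0.
  have [->|b0] := eqVneq b 0; first exact: Lam0x.
  by rewrite -skew_eval_conj // hG ?mul0r //; exists b.
have sG : size G = (size G).-1.+1 by rewrite prednK // size_poly_gt0.
have hdep : forall y, dep a (size G) y.
  by move=> y; rewrite sG; apply: (ker_bound sG) => i _; apply: hGall.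
have Psisurj := surj hdep PsiD PsiC Psiinj.
set f := fun c => skew_eval sigma delta P0 c.
have hf b : b != 0 -> f (sdc b a) * b = Psi b by move=> b0; apply: skew_eval_conj.
have hfnz z : conj_class sigma delta a z -> f z != 0.
  case=> b b0 ->; apply/eqP => h.
  have := hf b b0; rewrite h mul0r => /esym /Psiinj /eqP; exact/negP.
have hcomp z : conj_class sigma delta a z ->
    exists2 b, b != 0 & z = sdc b a /\ sdc (f z) z = sdc (Psi b) a.
  case=> b b0 ->; exists b => //; split => //.
  by rewrite sdc_comp // ?hfnz // ?hf //; exists b.
have hinj z z' : conj_class sigma delta a z -> conj_class sigma delta a z' ->
    sdc (f z) z = sdc (f z') z' -> z = z'.
  move=> hz hz'; have [b b0 [-> ->]] := hcomp z hz; have [b' b'0 [-> ->]] := hcomp z' hz'.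
  move=> ew.
  have Pb0 : Psi b != 0 by apply/eqP => /Psiinj /eqP; exact/negP.
  have Pb'0 : Psi b' != 0 by apply/eqP => /Psiinj /eqP; exact/negP.
  have h1 := conj_mul a Pb0; have h2 := conj_mul a Pb'0.
  rewrite ew in h1.
  have eC := ker_conj Pb0 h1 h2.
  set e := (Psi b)^-1 * Psi b' in eC.
  have hb' : b' = b * e.
    apply/eqP; rewrite -subr_eq0; apply/eqP; apply: Psiinj.
    rewrite PsiD -mulrN PsiC; last exact: inCN.
    by rewrite mulrN /e mulVKr ?unitK // subrr.
  have e0 : e != 0 by apply/eqP => e0; move: b'0; rewrite hb' e0 mulr0 eqxx.
  by rewrite hb' -sdc_comp // (sdcC e0 eC).
set g := fun w => (f (epsilon (inhabits 0)
   (fun z => conj_class sigma delta a z /\ sdc (f z) z = w)))^-1.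
exists g => z hz; split.
-
  have ex : exists z', conj_class sigma delta a z' /\ sdc (f z') z' = z.
    case: hz => c c0 ->.
    have [x hx] := Psisurj c.
    have x0 : x != 0 by apply/eqP => e; move: c0; rewrite -hx e Psi0 eqxx.
    exists (sdc x a); have hc : conj_class sigma delta a (sdc x a) by exists x.
    split => //.
    by rewrite sdc_comp ?hfnz // (hf x x0) hx.
  have [hz' ez'] := epsilon_spec (inhabits 0) _ ex.
  set z' := epsilon _ _ in hz' ez'.
  have fz'0 := hfnz _ hz'.
  rewrite /skew_prod /g -/z' invr_eq0 (negPf fz'0) -ez' sdc_comp ?invr_eq0 //.
  by rewrite mulVr ?unitK // sdc1 mulrV ?unitK.
-
  have fz0 := hfnz _ hz.
  have ex : exists z', conj_class sigma delta a z' /\ sdc (f z') z' = sdc (f z) z.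
    by exists z.
  have [hz' ez'] := epsilon_spec (inhabits 0) _ ex.
  set z' := epsilon _ _ in hz' ez'.
  rewrite /skew_prod (negPf fz0) /g -/z'.
  by rewrite (hinj _ _ hz' hz ez') mulVr ?unitK.
Qed.

End Dev.

Theorem corollary3p5 (K : unitRingType) (sigma : {rmorphism K -> K}) (delta : K -> K)
  (hK : skew_field K) (hdelta : sigma_derivation sigma delta)
  (halg : forall a : K, sd_algebraic sigma delta a) :
  forall P : {poly K}, skew_irreducible sigma delta P -> (2 < size P)%N ->
  forall a : K, defined_at sigma delta P 1 a.
Proof. exact: main. Qed.
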